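(* Let $E,F$ be Banach spaces, $a\in E$, $1\le p<\infty$, and $f:E\to F$. Suppose there exist $C,\delta,r>0$ such that \[ \Vert(f(a+x_{j})-f(a))_{j=1}^{k}\Vert_{w,1}\leq C\Vert(x_{j})_{j=1}^{k}\Vert_{w,p}^{r} \] for every $k\in\mathbb{N}$ and all $x_{1},\dots,x_{k}\in E$ with $\Vert(x_{j})_{j=1}^{k}\Vert_{w,p}<\delta$. Then $f$ is almost $p$-summing at $a$.
   Context: For a finite sequence $(y_j)_{j=1}^k$ in a Banach space $X$ and $1\le s<\infty$, $\Vert(y_{j})_{j=1}^k\Vert_{w,s}:=\sup_{\varphi\in B_{X'}}(\sum_{j=1}^k|\varphi(y_{j})|^{s})^{1/s}$. With $(r_j)$ the Rademacher functions, $f$ is almost $p$-summing at $a$ if there exist $C_a,\epsilon_a,r_a>0$ with $(\int_{0}^{1}\Vert\sum_{j=1}^{k}(f(a+x_{j})-f(a))r_{j}(t)\Vert^{2}dt)^{1/2}\leq C_{a}\Vert(x_{j})_{j=1}^{k}\Vert_{w,p}^{r_{a}}$ for all $k$ and $x_1,\dots,x_k\in E$ with $\Vert(x_{j})_{j=1}^{k}\Vert_{w,p}<\epsilon_{a}$. *)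

(* Defs.v *)
From HB Require Import structures.
From mathcomp Require Import all_boot all_order all_algebra.
From mathcomp Require Import all_classical all_reals all_analysis.
Set Implicit Arguments. Unset Strict Implicit. Unset Printing Implicit Defensive.
Import Order.TTheory GRing.Theory Num.Theory.
Import numFieldNormedType.Exports.
Local Open Scope classical_set_scope.
Local Open Scope ring_scope.

(* phi is an element of the closed unit ball of the (topological) dual X':
   a linear functional with |phi x| <= ||x|| (hence continuous, norm <= 1). *)
Definition dual_ball {R : realType} {X : normedModType R} (phi : X -> R) : Prop :=
  (forall x y : X, phi (x + y) = phi x + phi y) /\
  (forall (c : R) (x : X), phi (c *: x) = c * phi x) /\
  (forall x : X, `|phi x| <= `|x|).

Definition wnorm {R : realType} {X : normedModType R} (s : R) (k : nat)
  (y : 'I_k -> X) : R :=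
  sup [set (\sum_(j < k) `|phi (y j)| `^ s) `^ s^-1 | phi in [set phi | dual_ball phi]].

Definition rademacher {R : realType} (n : nat) (t : R) : R :=
  Num.sg (sin (2 ^+ n * pi * t)).

(* f almost p-summing at a; the ordinal j : 'I_k corresponds to index j+1 *)
Definition almost_p_summing {R : realType} {E F : normedModType R}
  (f : E -> F) (a : E) (p : R) : Prop :=
  exists C eps r : R, 0 < C /\ 0 < eps /\ 0 < r /\
    forall (k : nat) (x : 'I_k -> E), wnorm p x < eps ->
      Num.sqrt (Rintegral (@lebesgue_measure R) `[0, 1]
        (fun t => `| \sum_(j < k) rademacher j.+1 t *: (f (a + x j) - f a) | ^+ 2))
      <= C * wnorm p x `^ r.

(* Main.v *)
Require Import Defs.
From HB Require Import structures.
From mathcomp Require Import all_boot all_order all_algebra.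
From mathcomp Require Import all_classical all_reals all_analysis.
From mathcomp Require Import measurable_realfun.
From mathcomp Require Import measurable_realfun.
Import Order.TTheory GRing.Theory Num.Theory.
Import numFieldNormedType.Exports.
Local Open Scope classical_set_scope.
Local Open Scope ring_scope.
From mathcomp Require Import lra.
Import HBNNSimple.
Import HBNNSimple.

Section HBsec.
Variables (R : realType) (V : normedModType R).

Definition Qg (G : set (V * R)) :=
  [/\ (forall x a b, G (x, a) -> G (x, b) -> a = b),
      (forall x a y b, G (x, a) -> G (y, b) -> G (x + y, a + b)),
      (forall c x a, G (x, a) -> G (c *: x, c * a)) &
      (forall x a, G (x, a) -> a <= `|x|)].

Definition Bv (v : V) : set (V * R) := [set p | exists c, p = (c *: v, c * `|v|)].

Lemma QB v : Qg (Bv v).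
Proof.
split.
- move=> x a b [c [-> ->]] [c' [e ->]].
  have /eqP : (c - c') *: v = 0 by rewrite scalerBl e subrr.
  rewrite scaler_eq0 => /orP[|/eqP->]; last by rewrite normr0 !mulr0.
  by rewrite subr_eq0 => /eqP->.
- move=> x a y b [c [-> ->]] [c' [-> ->]]; exists (c + c').
  by rewrite scalerDl mulrDl.
- move=> c x a [c' [-> ->]]; exists (c * c').
  by rewrite scalerA mulrA.
- move=> x a [c [-> ->]]; rewrite normrZ.
  by apply: ler_wpM2r => //; exact: ler_norm.
Qed.

Lemma Q_pairs (U : set (V * R)) :
  (forall p q, U p -> U q -> exists Z, [/\ Qg Z, Z `<=` U, Z p & Z q]) -> Qg U.
Proof.
move=> hU; split.
- move=> x a b ha hb; have [Z [[h1 _ _ _] _ zp zq]] := hU _ _ ha hb.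
  exact: h1 zp zq.
- move=> x a y b ha hb; have [Z [[_ h2 _ _] ZU zp zq]] := hU _ _ ha hb.
  exact/ZU/h2.
- move=> c x a ha; have [Z [[_ _ h3 _] ZU zp _]] := hU _ _ ha ha.
  exact/ZU/h3.
- move=> x a ha; have [Z [[_ _ _ h4] ZU zp _]] := hU _ _ ha ha.
  exact: h4.
Qed.

Lemma extend_step (H : set (V * R)) : Qg H -> H (0, 0) ->
  (forall G, Qg G -> H `<=` G -> G `<=` H) ->
  forall x0, exists a, H (x0, a).
Proof.
move=> [h1 h2 h3 h4] H00 hmax x0; apply: contrapT => /forallNP hx0.
have Hneg y a : H (y, a) -> H (- y, - a).
  by move=> /(h3 (-1)); rewrite scaleN1r mulN1r.
pose L := [set u | exists y a, H (y, a) /\ u = a - `|y - x0|].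
have Lub z b y a : H (z, b) -> H (y, a) -> a - `|y - x0| <= `|z + x0| - b.
  move=> hz hy; have := h4 _ _ (h2 _ _ _ _ hy hz).
  have -> : y + z = (y - x0) + (z + x0) by rewrite addrACA addNr addr0.
  move=> /le_trans /(_ (ler_normD _ _)) => hh; lra.
have L0 : L (0 - `|0 - x0|) by exists 0, 0.
have Lsup : has_sup L.
  split; first by exists (0 - `|0 - x0|).
  exists (`|0 + x0| - 0) => u [y [a [hy ->]]]; exact: Lub.
pose c := sup L.
have cL y a : H (y, a) -> a - `|y - x0| <= c.
  by move=> hy; apply: sup_upper_bound => //; exists y, a.
have cU z b : H (z, b) -> c <= `|z + x0| - b.
  move=> hz; apply: ge_sup; first by exists (0 - `|0 - x0|).
  by move=> u [y [a [hy ->]]]; exact: Lub.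
have nscale (u : R) (y w : V) : 0 < u -> u * `|u^-1 *: y + w| = `|y + u *: w|.
  move=> u0; rewrite -[X in X * _](gtr0_norm u0) -normrZ scalerDr scalerA mulfV ?gt_eqF//.
  by rewrite scale1r.
pose G := [set p | exists y a t, H (y, a) /\ p = (y + t *: x0, a + t * c)].
have QG : Qg G.
  split.
  - move=> x a1 b1 [y [a [t [hy [ex ea]]]]] [y' [a' [t' [hy' [ex' eb]]]]].
    have tt : t = t'.
      apply: contrapT => /eqP; rewrite -subr_eq0 => tne.
      apply: (hx0 ((t - t')^-1 * (a' - a))).
      have -> : x0 = (t - t')^-1 *: (y' - y).
        have e : (t - t') *: x0 = y' - y.
          have e0 : y + t *: x0 = y' + t' *: x0 by rewrite -ex -ex'.
          rewrite scalerBl.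
          have -> : t *: x0 = (y' + t' *: x0) - y by rewrite -e0 addrAC subrr add0r.
          by rewrite addrAC addrK.
        by rewrite -e scalerA mulVf// scale1r.
      by apply: h3; apply: h2 => //; apply: Hneg.
    subst t'; have yy : y = y' by apply: (addIr (t *: x0)); rewrite -ex -ex'.
    subst y'; by rewrite ea eb (h1 _ _ _ hy hy').
  - move=> x a1 y1 b1 [y [a [t [hy [-> ->]]]]] [y' [a' [t' [hy' [-> ->]]]]].
    exists (y + y'), (a + a'), (t + t'); split; first exact: h2.
    by rewrite scalerDl mulrDl addrACA [in X in (_, X)]addrACA.
  - move=> c' x a1 [y [a [t [hy [-> ->]]]]].
    exists (c' *: y), (c' * a), (c' * t); split; first exact: h3.
    by rewrite scalerDr scalerA mulrDr mulrA.
  - move=> x a1 [y [a [t [hy [-> ->]]]]].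
    have [t0|t0|->] := ltgtP t 0; last by rewrite scale0r mul0r !addr0; exact: h4.
    + pose u := - t; have u0 : 0 < u by rewrite oppr_gt0.
      have := cL _ _ (h3 u^-1 _ _ hy).
      have -> : u^-1 *: y - x0 = u^-1 *: y + (- x0) by [].
      move=> hc; have := nscale u y (- x0) u0.
      rewrite scalerN -scaleNr opprK => hn.
      rewrite -hn.
      have -> : a = u * (u^-1 * a) by rewrite mulrA mulfV ?gt_eqF// mul1r.
      have -> : t = - u by rewrite opprK.
      move: hc; set N := `|_|; set b := u^-1 * a => hc; clearbody u N b; nra.
    + have := cU _ _ (h3 t^-1 _ _ hy) => hc.
      have := nscale t y x0 t0 => hn; rewrite -hn.
      have -> : a = t * (t^-1 * a) by rewrite mulrA mulfV ?gt_eqF// mul1r.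
      move: hc; set N := `|_|; set b := t^-1 * a => hc; clearbody N b; nra.
have HG : H `<=` G.
  by move=> [y a] hy; exists y, a, 0; split => //; rewrite scale0r mul0r !addr0.
apply: (hx0 c); apply: (hmax _ QG HG).
by exists 0, 0, 1; split => //; rewrite scale1r mul1r !add0r.
Qed.

Lemma hahn_banach (v : V) : exists phi : V -> R, dual_ball phi /\ phi v = `|v|.
Proof.
pose P := fun G => Qg (G `|` Bv v).
have [A [PA Amax]] : exists A, P A /\ forall B, A `<` B -> ~ P B.
  apply: Zorn_bigcup => Fam FP Ftot.
  rewrite /P; apply: Q_pairs => p q.
  have sub X : Fam X -> X `|` Bv v `<=` \bigcup_(X in Fam) X `|` Bv v.
    by move=> FX z [Xz|Bz]; [left; exists X|right].
  move=> [[X FX Xp]|Bp] [[Y FY Yq]|Bq].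
  - have [XY|YX] := Ftot _ _ FX FY.
    + by exists (Y `|` Bv v); split; [exact: FP|exact: sub|left; exact: XY|left].
    + by exists (X `|` Bv v); split; [exact: FP|exact: sub|left|left; exact: YX].
  - by exists (X `|` Bv v); split; [exact: FP|exact: sub|left|right].
  - by exists (Y `|` Bv v); split; [exact: FP|exact: sub|right|left].
  - exists (Bv v); split => //; exact: QB.
pose H := A `|` Bv v.
have QH : Qg H by exact: PA.
have BH : Bv v `<=` H by move=> z Bz; right.
have Hmax : forall G, Qg G -> H `<=` G -> G `<=` H.
  move=> G QG HG z Gz; apply: contrapT => nHz.
  apply: (Amax G).
    split; first by move=> w Aw; apply: HG; left.
    by move=> GA; apply: nHz; left; exact: GA.
  rewrite /P (_ : G `|` Bv v = G) //; apply/seteqP; split => w.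
    by case=> // /BH /HG.
  by left.
have H00 : H (0, 0).
  by apply: BH; exists 0; rewrite scale0r mul0r.
have Htot := @extend_step H QH H00 Hmax.
have [phi hphi] := choice Htot.
case: QH => [h1 h2 h3 h4].
exists phi; split; last first.
  apply: (h1 v); first exact: hphi.
  by apply: BH; exists 1; rewrite scale1r mul1r.
split; [|split].
- move=> x y; apply: (h1 (x + y)); first exact: hphi.
  by apply: h2; exact: hphi.
- move=> c x; apply: (h1 (c *: x)); first exact: hphi.
  by apply: h3; exact: hphi.
- move=> x; rewrite ler_norml; apply/andP; split; last exact/h4/hphi.
  have := h4 _ _ (h3 (-1) _ _ (hphi x)).
  by rewrite scaleN1r normrN mulN1r lerNl.
Qed.

End HBsec.

Lemma int_bound (R : realType) (f : R -> R) (M : R) :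
  (forall t, 0 <= f t) -> (forall t, f t <= M) ->
  Rintegral (@lebesgue_measure R) `[0, 1] f <= M.
Proof.
move=> f0 fM.
have M0 : 0 <= M by apply: le_trans (f0 0) (fM 0).
have mD : measurable (`[0, 1] : set R) by [].
rewrite /Rintegral.
set I := (\int[_]_(x in _) _)%E.
have I0 : (0 <= I)%E by apply: integral_ge0 => x _; rewrite lee_fin.
have IM : (I <= M%:E)%E.
  rewrite /I ge0_integralE; last by move=> x _; rewrite lee_fin.
  apply: ge_ereal_sup => _ [h /= hle <-].
  rewrite -[X in sintegral _ X](@patch_setT _ _ (fun=> 0%R)) -integral_nnsfun//.
  apply: le_trans.
    have := (@ge0_le_integral _ _ _ (@lebesgue_measure R) setT measurableT (fun x => (h x)%:E) ((cst M%:E) \_ `[0, 1])).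
    apply.
    - by move=> x _; rewrite lee_fin.
    - by apply/measurable_EFinP; exact: measurable_funTS.
    - by apply/(measurable_restrictT _ mD); exact: measurable_cst.
    - move=> x _; apply: (le_trans (hle x)); rewrite /patch; case: ifP => //.
      by rewrite lee_fin.
  rewrite -integral_mkcond integral_cst//.
  have L : (@lebesgue_measure R `[0%R, 1%R] = 1%E).
    by rewrite lebesgue_measure_itv/= lte_fin ltr01 oppr0 adde0.
  by rewrite [X in (_ * X)%E]L mule1.
have : I \is a fin_num by rewrite ge0_fin_numE// (le_lt_trans IM) ?ltry.
by move=> /fineK IE; rewrite -lee_fin IE.
Qed.

Theorem mainTheorem8 (R : realType) (E F : completeNormedModType R)
  (a : E) (p : R) (f : E -> F) :
  1 <= p ->
  (exists C delta r : R, 0 < C /\ 0 < delta /\ 0 < r /\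
     forall (k : nat) (x : 'I_k -> E), wnorm p x < delta ->
       wnorm 1 (fun j => f (a + x j) - f a) <= C * wnorm p x `^ r) ->
  almost_p_summing f a p.
Proof.
move=> p1 [C [delta [r [C0 [d0 [r0 hyp]]]]]].
exists C, delta, r; do 3 split => //.
move=> k x wx.
have W := hyp k x wx.
set y := (fun j => f (a + x j) - f a) in W *.
set w1 := wnorm 1 y in W *.
have eqw (phi : F -> R) : (\sum_(j < k) `|phi (y j)| `^ 1) `^ 1^-1 = \sum_(j < k) `|phi (y j)|.
  rewrite invr1 powRr1; last by apply: sumr_ge0 => j _; exact: powR_ge0.
  by apply: eq_bigr => j _; rewrite powRr1.
have pw t : `|\sum_(j < k) rademacher j.+1 t *: y j| <= w1.
  set u := \sum_(j < k) _.
  have [phi [[pa [ps pn]] pu]] := @hahn_banach R F u.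
  rewrite -pu.
  have phi0 : phi 0 = 0 by rewrite -(scale0r (0 : F)) ps mul0r.
  rewrite /u (big_morph phi pa phi0).
  apply: (@le_trans _ _ (\sum_(j < k) `|phi (y j)|)).
    apply: ler_sum => j _; rewrite ps.
    apply: (le_trans (ler_norm _)); rewrite normrM.
    rewrite -[leRHS]mul1r; apply: ler_wpM2r => //.
    by rewrite /rademacher normr_sg; case: (_ != 0).
  rewrite /w1 /wnorm; apply: sup_upper_bound; last first.
    by exists phi => //; rewrite eqw.
  split; first by exists (\sum_(j < k) `|phi (y j)|), phi => //; rewrite eqw.
  exists (\sum_(j < k) `|y j|) => _ [phi' [pa' [ps' pn']] <-].
  by rewrite eqw; apply: ler_sum => j _.
have w0 : 0 <= w1 by apply: le_trans (pw 0).
apply: le_trans W.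
have -> : w1 = Num.sqrt (w1 ^+ 2) by rewrite sqrtr_sqr ger0_norm.
rewrite ler_sqrt ?exprn_ge0//.
apply: int_bound => t; first exact: exprn_ge0.
by rewrite !expr2; apply: ler_pM => //; exact: pw.
Qed.
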